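(* For every $n\equiv 9 \pmod{16}$ (with $n\geq 9$), there exists an almost 2-perfect maximum 8-cycle packing of $K_n$.
   Context: An 8-cycle packing of $K_n$ on vertex set $\mathcal{X}$ is a triple $(\mathcal{X},\mathcal{C},\mathcal{L})$ with $\mathcal{C}$ a collection of pairwise edge-disjoint 8-cycles of $K_n$ and leave $\mathcal{L}$ the set of edges in no cycle of $\mathcal{C}$; it is maximum if $|\mathcal{L}|$ is minimum among all 8-cycle packings of $K_n$. For an 8-cycle $C$, an inside 8-cycle of $C$ is an 8-cycle on the same vertex set sharing no edge with $C$. The packing is almost 2-perfect if one can choose for each $C\in\mathcal{C}$ an inside 8-cycle $C'$ such that $(\mathcal{X},\{C'\},\mathcal{L})$ is again an 8-cycle packing with the same leave. *)

(* Defs.v *)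
From mathcomp Require Import all_boot.
Set Implicit Arguments. Unset Strict Implicit. Unset Printing Implicit Defensive.

Definition Kn_edges (n : nat) : {set {set 'I_n}} := [set e : {set 'I_n} | #|e| == 2].

(* An 8-cycle is given by a cyclic sequence of 8 distinct vertices
   (c_0, ..., c_7); its edges are {c_i, c_(i+1 mod 8)}. *)
Definition cycle8 (n : nat) := 8.-tuple 'I_n.

Definition is_cycle8 n (c : cycle8 n) : bool := uniq c.

Definition cyc_edges n (c : cycle8 n) : {set {set 'I_n}} :=
  [set [set tnth c i; tnth c (ordS i)] | i : 'I_8].

Definition cyc_verts n (c : cycle8 n) : {set 'I_n} := [set x in c].

Definition is_packing n (Cs : seq (cycle8 n)) : bool :=
  all (@is_cycle8 n) Cs &&
  pairwise (fun c d => [disjoint cyc_edges c & cyc_edges d]) Cs.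

Definition leave n (Cs : seq (cycle8 n)) : {set {set 'I_n}} :=
  Kn_edges n :\: \bigcup_(c <- Cs) cyc_edges c.

Definition maximum_packing n (Cs : seq (cycle8 n)) : Prop :=
  is_packing Cs /\
  forall Ds : seq (cycle8 n), is_packing Ds -> #|leave Cs| <= #|leave Ds|.

Definition inside n (c c' : cycle8 n) : bool :=
  [&& is_cycle8 c', cyc_verts c' == cyc_verts c &
      [disjoint cyc_edges c & cyc_edges c']].

Definition almost_2perfect n (Cs : seq (cycle8 n)) : Prop :=
  exists Cs' : seq (cycle8 n),
    [/\ all2 (@inside n) Cs Cs', is_packing Cs' & leave Cs' = leave Cs].

(* Main.v *)
Require Import Defs.
From mathcomp Require Import all_boot zify.
Set Implicit Arguments. Unset Strict Implicit. Unset Printing Implicit Defensive.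

Lemma set2_eqE (T : finType) (a b a' b' : T) :
  [set a; b] = [set a'; b'] -> (a = a' /\ b = b') \/ (a = b' /\ b = a').
Proof.
move=> E.
have ha : a \in [set a'; b'] by rewrite -E set21.
have hb : b \in [set a'; b'] by rewrite -E set22.
have ha' : a' \in [set a; b] by rewrite E set21.
have hb' : b' \in [set a; b] by rewrite E set22.
move: ha hb ha' hb'; rewrite !inE.
by case/orP=>/eqP-> ; case/orP=>/eqP->; case/orP=>/eqP ?; case/orP=>/eqP ?; subst; auto.
Qed.

Lemma ordS_neq (i : 'I_8) : i != ordS i.
Proof. by case: i => [[|[|[|[|[|[|[|[|]]]]]]]] ]. Qed.

Lemma ordS2_neq (i : 'I_8) : ordS (ordS i) != i.
Proof. by case: i => [[|[|[|[|[|[|[|[|]]]]]]]] ]. Qed.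

Section Gen.
Variable n : nat.

Lemma cyc_edgesP (c : cycle8 n) e :
  reflect (exists i : 'I_8, e = [set tnth c i; tnth c (ordS i)]) (e \in cyc_edges c).
Proof. by apply: (iffP imsetP) => [[i _ ->]|[i ->]]; exists i. Qed.

Lemma card_cyc_edges (c : cycle8 n) : uniq c -> #|cyc_edges c| = 8.
Proof.
move=> /tuple_uniqP inj.
rewrite card_in_imset ?card_ord //.
move=> i j _ _ /set2_eqE [[/inj -> _] | [/inj e1 /inj e2]] //.
by move: (ordS2_neq j); rewrite -e1 e2 eqxx.
Qed.

Lemma mem_bigcup_has (s : seq (cycle8 n)) e :
  (e \in \bigcup_(c <- s) cyc_edges c) = has (fun c => e \in cyc_edges c) s.
Proof.
elim: s => [|c s IH]; first by rewrite big_nil inE.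
by rewrite big_cons inE IH.
Qed.

Lemma edges_sub (c : cycle8 n) : uniq c -> cyc_edges c \subset Kn_edges n.
Proof.
move=> /tuple_uniqP inj; apply/subsetP => e /cyc_edgesP [i ->].
rewrite inE cards2; case: (tnth c i =P tnth c (ordS i)) => [E|//]; have {}E := inj _ _ E.
by move: (ordS_neq i); rewrite {1}E eqxx.
Qed.

Lemma card_union_packing (Ds : seq (cycle8 n)) :
  is_packing Ds -> #|\bigcup_(c <- Ds) cyc_edges c| = 8 * size Ds.
Proof.
elim: Ds => [|c Ds IH]; first by rewrite big_nil cards0.
rewrite /is_packing /= => /andP[/andP[uc aD] /andP[dc pD]].
have H0 : cyc_edges c :&: \bigcup_(d <- Ds) cyc_edges d = set0.
  apply/setP=> e; rewrite !inE mem_bigcup_has.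
  apply/negP => /andP[ec /hasP[d dD ed]].
  by move: (allP dc d dD) => /disjointFr /(_ ec); rewrite ed.
rewrite big_cons cardsU H0 cards0 subn0 IH; last by rewrite /is_packing aD pD.
by rewrite card_cyc_edges //; lia.
Qed.

Lemma card_leave (Ds : seq (cycle8 n)) : is_packing Ds ->
  #|leave Ds| = 'C(n, 2) - 8 * size Ds /\ 8 * size Ds <= 'C(n, 2).
Proof.
move=> pD.
have sub : \bigcup_(c <- Ds) cyc_edges c \subset Kn_edges n.
  apply/subsetP => e; rewrite mem_bigcup_has => /hasP[c cD ec].
  move: pD => /andP[/allP aD _].
  by apply: (subsetP (edges_sub (aD c cD))).
have cK : #|Kn_edges n| = 'C(n, 2) by rewrite /Kn_edges card_draws card_ord.
rewrite /leave cardsD (setIidPr sub) -(card_union_packing pD) -cK.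
by split => //; apply: subset_leq_card.
Qed.

End Gen.
Definition upeq (p q : nat * nat) : bool :=
  ((p.1 == q.1) && (p.2 == q.2)) || ((p.1 == q.2) && (p.2 == q.1)).

Definition epair (t : seq nat) (i : nat) := (nth 0 t i, nth 0 t (i.+1 %% 8)).
Definition I8 := iota 0 8.

Definition tdisj (t s : 8.-tuple nat) : bool :=
  all (fun i => all (fun j => ~~ upeq (epair t i) (epair s j)) I8) I8.

Definition tinside (t t' : 8.-tuple nat) : bool :=
  [&& uniq t', perm_eq t t' & tdisj t t'].

Definition tcov (T T' : seq (8.-tuple nat)) : bool :=
  all (fun t' : 8.-tuple nat => all (fun i => has (fun t : 8.-tuple nat => has (fun j => upeq (epair t' i) (epair t j)) I8) T) I8) T'.

Definition Lk (k : nat) := if k is 0 then 9 else if k is 1 then 17 else 16.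

Definition adm (k u v : nat) : bool :=
  [&& u != v, u < Lk k, v < Lk k & (k == 2) ==> ((u < 8) != (v < 8))].

Definition tok (k : nat) (t : 8.-tuple nat) : bool :=
  uniq t && all (fun i => adm k (epair t i).1 (epair t i).2) I8.

Definition K9C : seq (8.-tuple nat) :=
  [:: [tuple 0; 1; 7; 5; 2; 8; 3; 6]; [tuple 0; 2; 6; 5; 3; 7; 4; 8];
      [tuple 0; 3; 1; 8; 5; 4; 6; 7]; [tuple 0; 4; 2; 7; 8; 6; 1; 5]].
Definition K9D : seq (8.-tuple nat) :=
  [:: [tuple 0; 2; 7; 3; 1; 6; 5; 8]; [tuple 0; 3; 8; 2; 4; 6; 7; 5];
      [tuple 0; 1; 5; 3; 6; 8; 7; 4]; [tuple 0; 6; 2; 5; 4; 8; 1; 7]].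
Definition shift17 (t : 8.-tuple nat) (i : nat) : 8.-tuple nat :=
  [tuple of map (fun x => (x + i) %% 17) t].
Definition K17C : seq (8.-tuple nat) :=
  [seq shift17 [tuple 0; 1; 3; 6; 2; 7; 16; 10] i | i <- iota 0 17].
Definition K17D : seq (8.-tuple nat) :=
  [seq shift17 [tuple 0; 6; 1; 16; 3; 2; 10; 7] i | i <- iota 0 17].
Definition K88C : seq (8.-tuple nat) :=
[:: [tuple 0; 8; 1; 9; 2; 10; 3; 11]; [tuple 0; 9; 3; 8; 2; 11; 1; 10]; [tuple 0; 12; 1; 13; 2; 14; 3; 15]; [tuple 0; 13; 3; 12; 2; 15; 1; 14]; [tuple 4; 8; 5; 9; 6; 10; 7; 11]; [tuple 4; 9; 7; 8; 6; 11; 5; 10]; [tuple 4; 12; 5; 13; 6; 14; 7; 15]; [tuple 4; 13; 7; 12; 6; 15; 5; 14]].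
Definition K88D : seq (8.-tuple nat) :=
[:: [tuple 0; 9; 3; 8; 2; 11; 1; 10]; [tuple 0; 8; 1; 9; 2; 10; 3; 11]; [tuple 0; 13; 3; 12; 2; 15; 1; 14]; [tuple 0; 12; 1; 13; 2; 14; 3; 15]; [tuple 4; 9; 7; 8; 6; 11; 5; 10]; [tuple 4; 8; 5; 9; 6; 10; 7; 11]; [tuple 4; 13; 7; 12; 6; 15; 5; 14]; [tuple 4; 12; 5; 13; 6; 14; 7; 15]].

Definition TC (k : nat) := if k is 0 then K9C else if k is 1 then K17C else K88C.
Definition TD (k : nat) := if k is 0 then K9D else if k is 1 then K17D else K88D.

Definition good (k : nat) : bool :=
  [&& all (tok k) (TC k), all (tok k) (TD k), pairwise tdisj (TC k),
      pairwise tdisj (TD k), all2 tinside (TC k) (TD k), tcov (TC k) (TD k)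
    & tcov (TD k) (TC k)].

Lemma good0 : good 0. Proof. by vm_compute. Qed.
Lemma good1 : good 1. Proof. by vm_compute. Qed.
Lemma good2 : good 2. Proof. by vm_compute. Qed.
Lemma sizeTC k : size (TC k) = if k is 0 then 4 else if k is 1 then 17 else 8.
Proof. by case: k => [|[|]]. Qed.
Definition blk := (bool * nat * nat)%type.
Definition kindb (b : blk) : nat := if b.1.1 then 2 else if b.1.2 is 0 then 0 else 1.
Definition phi (b : blk) (u : nat) : nat :=
  if b.1.1 then (if u < 8 then 1 + 8 * b.1.2 + u else 1 + 8 * b.2 + (u - 8))
  else if b.1.2 is 0 then u else if u == 0 then 0 else 16 * b.1.2 - 8 + u.
Definition pg (g : nat) := (g + 1) %/ 2.
Definition grp (v : nat) := (v - 1) %/ 8.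
Definition sg (v : nat) := pg (grp v).
Definition key2 (x y : nat) : blk :=
  if (minn x y == 0) || (sg (minn x y) == sg (maxn x y)) then (false, sg (maxn x y), 0)
  else (true, grp (minn x y), grp (maxn x y)).
Definition valid (k : nat) (b : blk) : bool :=
  if b.1.1 then [&& b.1.2 < b.2, b.2 <= k.*2 & pg b.1.2 != pg b.2]
  else (b.1.2 <= k) && (b.2 == 0).

Lemma key2C x y : key2 x y = key2 y x.
Proof. by rewrite /key2 minnC maxnC. Qed.

Lemma key2_B j x y : x != y -> (x == 0) || (sg x == j) -> (y == 0) || (sg y == j) ->
  key2 x y = (false, j, 0).
Proof.
wlog le : x y / x <= y.
  move=> W; case: (leqP x y) => h; first exact: W.
  by move=> ne hx hy; rewrite key2C; apply: W => //; [exact: ltnW | rewrite eq_sym].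
move=> ne hx hy; rewrite /key2 (minn_idPl le) (maxn_idPr le).
have y0 : (y == 0) = false by apply/eqP; lia.
move: hy; rewrite y0 /= => /eqP hy; subst j.
by case/orP: hx => ->; rewrite ?orbT.
Qed.

Lemma key2_Cl g h x y : g < h -> pg g != pg h -> 1 + 8 * g <= x < 9 + 8 * g ->
  1 + 8 * h <= y < 9 + 8 * h -> key2 x y = (true, g, h).
Proof.
move=> gh pgh hx hy.
have le : x <= y by lia.
have gx : grp x = g by rewrite /grp; lia.
have gy : grp y = h by rewrite /grp; lia.
rewrite /key2 (minn_idPl le) (maxn_idPr le) /sg gx gy.
have -> : (x == 0) = false by apply/eqP; lia.
by rewrite (negbTE pgh).
Qed.

Section Blk.
Variable k : nat.
Variable b : blk.
Hypothesis vb : valid k b.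

Lemma R1 u : u < Lk (kindb b) -> phi b u < (16 * k + 8).+1.
Proof.
move: vb; rewrite /valid /phi /kindb; case: b => [[[] g] h] /=.
  move=> /and3P[gh hk _] hu; rewrite -mul2n in hk; case: ifP => _; lia.
case: g => [|g] /andP[gk _] /= hu; first lia.
case: eqP => _; lia.
Qed.

Lemma R2 u v : u < Lk (kindb b) -> v < Lk (kindb b) -> phi b u = phi b v -> u = v.
Proof.
move: vb; rewrite /valid /phi /kindb; case: b => [[[] g] h] /=.
  move=> /and3P[gh hk _] hu hv; rewrite -mul2n in hk; case: ifP => hu8; case: ifP => hv8; lia.
case: g => [|g] /andP[gk _] /= hu hv //.
case: eqP => u0; case: eqP => v0; lia.
Qed.

Lemma R3 u v : adm (kindb b) u v -> key2 (phi b u) (phi b v) = b.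
Proof.
move: vb; rewrite /valid /phi /kindb /adm; case: b => [[[] g] h] /=.
  move=> /and3P[gh hk pgh] /and4P[ne hu hv /= x8]; rewrite -mul2n in hk.
  case: (ltnP u 8) x8 => hu8 /=; case: (ltnP v 8) => hv8 //= _.
    by apply: key2_Cl => //; lia.
  by rewrite key2C; apply: key2_Cl => //; lia.
case: g => [|g] /andP[gk /eqP ->] /and4P[ne hu hv _] /=.
all: rewrite /Lk /= in hu hv.
  apply: key2_B => //; apply/orP; right; rewrite /sg /pg /grp; apply/eqP; lia.
have hs : forall w, w < 17 -> ((if w == 0 then 0 else 16 * g.+1 - 8 + w) == 0) ||
   (sg (if w == 0 then 0 else 16 * g.+1 - 8 + w) == g.+1).
  move=> w hw; case: (w =P 0) => [//|w0] /=; apply/orP; right; rewrite /sg /pg /grp; apply/eqP; lia.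
apply: key2_B; [|exact: hs|exact: hs].
by case: (u =P 0) ne => u0; case: (v =P 0) => v0 ne /=; apply/eqP; lia.
Qed.

End Blk.

Lemma goodk (b : blk) : good (kindb b).
Proof. by rewrite /kindb; case: b => [[[] [|g]] h]; [exact: good2|exact: good2|exact: good0|exact: good1]. Qed.

Lemma tok_lab kk (t : 8.-tuple nat) (i : 'I_8) : tok kk t ->
  [/\ tnth t i < Lk kk, tnth t (ordS i) < Lk kk & adm kk (tnth t i) (tnth t (ordS i))].
Proof.
move=> /andP[_ /allP /(_ i)]; rewrite mem_iota /= ltn_ord => /(_ isT).
rewrite /epair /= => h; rewrite !(tnth_nth 0) /=; by move: (h) => /and4P[_ ? ? _].
Qed.

Lemma tok_mem kk (t : 8.-tuple nat) x : tok kk t -> x \in t -> x < Lk kk.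
Proof. by move=> ht /tnthP[i ->]; case: (tok_lab i ht). Qed.

Lemma upeq_key p q : upeq p q -> key2 p.1 p.2 = key2 q.1 q.2.
Proof.
case: p q => [a c] [a' c'] /orP[] /andP[/eqP /= -> /eqP /= ->] //.
by rewrite key2C.
Qed.

Lemma all2_cat' (A B : Type) (r : A -> B -> bool) s t s' t' :
  all2 r s t -> all2 r s' t' -> all2 r (s ++ s') (t ++ t').
Proof.
elim: s t => [|x s IH] [|y t] //= /andP[-> /IH h] /h //.
Qed.

Lemma pw_flat (A T : eqType) (r : rel T) (F : A -> seq T) (bs : seq A) :
  uniq bs -> (forall b, b \in bs -> pairwise r (F b)) ->
  (forall b b' x y, b \in bs -> b' \in bs -> b != b' -> x \in F b -> y \in F b' -> r x y) ->
  pairwise r (flatten (map F bs)).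
Proof.
elim: bs => [|b bs IH] //= /andP[nb ub] hw hx.
rewrite pairwise_cat; apply/and3P; split; last first.
- apply: IH => //.
    by move=> c cb; apply: hw; rewrite inE cb orbT.
  by move=> c c' x y cb c'b; apply: hx; rewrite inE ?cb ?c'b orbT.
- by apply: hw; rewrite mem_head.
apply/allrelP => x y xb /flattenP[s /mapP[b' b'bs ->] yb'].
apply: (hx b b') => //; first by rewrite mem_head.
  by rewrite inE b'bs orbT.
by apply: contraNneq nb => ->.
Qed.

Lemma has_flat (A T : Type) (p : pred T) (F : A -> seq T) (bs : seq A) :
  has p (flatten (map F bs)) = has (fun b => has p (F b)) bs.
Proof. by elim: bs => //= b bs IH; rewrite has_cat IH. Qed.

Lemma all_flat (A T : Type) (p : pred T) (F : A -> seq T) (bs : seq A) :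
  all p (flatten (map F bs)) = all (fun b => all p (F b)) bs.
Proof. by elim: bs => //= b bs IH; rewrite all_cat IH. Qed.

Lemma all2_flat (A : eqType) (T : Type) (r : T -> T -> bool) (F G : A -> seq T) (bs : seq A) :
  (forall b, b \in bs -> all2 r (F b) (G b)) -> all2 r (flatten (map F bs)) (flatten (map G bs)).
Proof.
elim: bs => //= b bs IH h; apply: all2_cat'; first by apply: h; rewrite mem_head.
by apply: IH => c cb; apply: h; rewrite inE cb orbT.
Qed.

Fixpoint blocks (k : nat) : seq blk :=
  if k is k'.+1 then
    blocks k' ++ (false, k'.+1, 0) :: [seq (true, g, (k'.*2).+1) | g <- iota 0 (k'.*2).+1]
       ++ [seq (true, g, (k'.*2).+2) | g <- iota 0 (k'.*2).+1]
  else [:: (false, 0, 0)].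

Definition lvl (b : blk) := if b.1.1 then pg b.2 else b.1.2.

Lemma valid_lvl k b : valid k b -> lvl b <= k.
Proof.
rewrite /valid /lvl; case: b => [[[] g] h] /=; last by case/andP.
by case/and3P => _ hk _; rewrite /pg -mul2n in hk *; lia.
Qed.

Lemma valid_mono k b : valid k b -> valid k.+1 b.
Proof.
rewrite /valid; case: b => [[[] g] h] /=; last by case/andP => ? ->; rewrite andbT; lia.
by case/and3P => -> hk ->; rewrite andbT -!mul2n in hk *; lia.
Qed.

Lemma blocksS k : blocks k.+1 =
    blocks k ++ (false, k.+1, 0) :: [seq (true, g, (k.*2).+1) | g <- iota 0 (k.*2).+1]
       ++ [seq (true, g, (k.*2).+2) | g <- iota 0 (k.*2).+1].
Proof. by []. Qed.

Lemma blocks_valid k b : b \in blocks k -> valid k b.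
Proof.
elim: k b => [|k IH] b; first by rewrite inE => /eqP ->.
rewrite blocksS mem_cat => /orP[/IH /valid_mono //|]; rewrite in_cons => /orP[/eqP -> /=|].
  by rewrite /valid /= leqnn.
rewrite mem_cat => /orP[] /mapP[g]; rewrite mem_iota => /andP[_ hg] -> /=;
  apply/and3P; split; rewrite /pg -?mul2n /= in hg *; lia.
Qed.

Lemma blocks_uniq k : uniq (blocks k).
Proof.
elim: k => [|k IH] //.
rewrite blocksS cat_uniq IH andTb; apply/andP; split.
- apply/hasP => -[b bin bk].
  have := valid_lvl (blocks_valid bk).
  move: bin; rewrite in_cons => /orP[/eqP -> |]; first by rewrite /lvl /=; lia.
  rewrite mem_cat => /orP[] /mapP[g _ ->]; rewrite /lvl /pg /= -!mul2n; lia.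
- rewrite cons_uniq mem_cat negb_or; apply/andP; split.
    by apply/andP; split; apply/negP => /mapP[g _].
  rewrite cat_uniq !map_inj_uniq ?iota_uniq //; try by move=> x y [].
  rewrite andbT andTb; apply/hasP => -[b /mapP[g _ ->] /mapP[g' _]].
  by move/(congr1 (fun p => p.2)) => /= /eqP; lia.
Qed.

Lemma sumn_CC (s : seq nat) h :
  sumn [seq size (TC (kindb b)) | b <- [seq (true, g, h) | g <- s]] = 8 * size s.
Proof. by elim: s => //= g s ->; rewrite mulnS. Qed.

Lemma sumn_blocks k : sumn [seq size (TC (kindb b)) | b <- blocks k] = 16 * k * k + 17 * k + 4.
Proof.
elim: k => [|k IH] //.
have sc : forall (x : blk) s, sumn [seq size (TC (kindb b)) | b <- x :: s] =
  size (TC (kindb x)) + sumn [seq size (TC (kindb b)) | b <- s] by [].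
rewrite blocksS map_cat sumn_cat IH sc map_cat sumn_cat !sumn_CC size_iota -mul2n /=.
lia.
Qed.

Section Main.
Variable k : nat.
Local Notation n := (16 * k + 8).+1.

Definition Phi (b : blk) (u : nat) : 'I_n := inord (phi b u).
Definition mk (b : blk) (t : 8.-tuple nat) : cycle8 n := [tuple of map (Phi b) t].

Lemma val_Phi b u : valid k b -> u < Lk (kindb b) -> val (Phi b u) = phi b u.
Proof. by move=> vb hu; apply: inordK; apply: R1. Qed.

Lemma tnth_epair (t : 8.-tuple nat) (i : 'I_8) : (tnth t i, tnth t (ordS i)) = epair t i.
Proof. by rewrite /epair !(tnth_nth 0). Qed.

Lemma edge_up b b' a c a' c' : valid k b -> valid k b' ->
  a < Lk (kindb b) -> c < Lk (kindb b) -> a' < Lk (kindb b') -> c' < Lk (kindb b') ->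
  [set Phi b a; Phi b c] = [set Phi b' a'; Phi b' c'] ->
  upeq (phi b a, phi b c) (phi b' a', phi b' c').
Proof.
move=> vb vb' ha hc ha' hc' /set2_eqE [[E1 E2]|[E1 E2]];
  move: (congr1 val E1) (congr1 val E2); rewrite !val_Phi // => -> ->;
  by rewrite /upeq /= !eqxx ?orbT.
Qed.

Lemma upeq_inj b a c a' c' : valid k b ->
  a < Lk (kindb b) -> c < Lk (kindb b) -> a' < Lk (kindb b) -> c' < Lk (kindb b) ->
  upeq (phi b a, phi b c) (phi b a', phi b c') -> upeq (a, c) (a', c').
Proof.
move=> vb ha hc ha' hc'; rewrite /upeq /= => /orP[] /andP[/eqP E1 /eqP E2].
  by rewrite (R2 vb ha ha' E1) (R2 vb hc hc' E2) !eqxx.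
by rewrite (R2 vb ha hc' E1) (R2 vb hc ha' E2) !eqxx orbT.
Qed.

Lemma mem_I8 (i : 'I_8) : (i : nat) \in I8.
Proof. by rewrite mem_iota /= ltn_ord. Qed.

Lemma disj_gen b b' t s : valid k b -> valid k b' -> tok (kindb b) t -> tok (kindb b') s ->
  (b = b' -> tdisj t s) -> [disjoint cyc_edges (mk b t) & cyc_edges (mk b' s)].
Proof.
move=> vb vb' ht hs hd.
rewrite -setI_eq0; apply/eqP/setP => e; rewrite !inE; apply/negP.
move=> /andP[/cyc_edgesP[i ->] /cyc_edgesP[j]]; rewrite !tnth_map => E.
case: (tok_lab i ht) => h1 h2 a1; case: (tok_lab j hs) => h3 h4 a2.
have U := edge_up vb vb' h1 h2 h3 h4 E.
case: (b =P b') => bb'; last first.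
  by apply: bb'; rewrite -(R3 vb a1) -(R3 vb' a2); apply: (upeq_key U).
subst b'; move: (hd erefl) => /allP /(_ _ (mem_I8 i)) /allP /(_ _ (mem_I8 j)).
by rewrite -!tnth_epair (upeq_inj vb h1 h2 h3 h4 U).
Qed.

Lemma uniq_mk b t : valid k b -> tok (kindb b) t -> uniq (mk b t).
Proof.
move=> vb ht; rewrite /mk /= map_inj_in_uniq; first by case/andP: ht.
move=> x y xt yt /(congr1 val).
have hx := tok_mem ht xt; have hy := tok_mem ht yt.
by rewrite !val_Phi //; apply: (R2 vb hx hy).
Qed.

Lemma inside_mk b t t' : valid k b -> tok (kindb b) t -> tok (kindb b) t' ->
  tinside t t' -> inside (mk b t) (mk b t').
Proof.
move=> vb ht ht' /and3P[_ pe dj].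
apply/and3P; split; first exact: uniq_mk.
  apply/eqP/setP => x; rewrite !inE /mk /=.
  by apply: perm_mem; apply: perm_map; rewrite perm_sym.
by apply: disj_gen => // _.
Qed.

Lemma cover_mk b T T' : valid k b -> all (tok (kindb b)) T -> all (tok (kindb b)) T' ->
  tcov T T' -> forall t', t' \in T' -> forall e, e \in cyc_edges (mk b t') ->
  has (fun t => e \in cyc_edges (mk b t)) T.
Proof.
move=> vb hT hT' cov t' t'T e /cyc_edgesP[i ->]; rewrite !tnth_map.
move: cov => /allP /(_ t' t'T) /allP /(_ _ (mem_I8 i)) /hasP[t tT /hasP[j]].
rewrite mem_iota => /andP[_ /= j8] U.
apply/hasP; exists t => //; apply/cyc_edgesP; exists (Ordinal j8); rewrite !tnth_map.
rewrite !(tnth_nth 0) /=; move: U; rewrite /upeq /epair /=.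
by case/orP => /andP[/eqP -> /eqP ->] //; rewrite setUC.
Qed.

Definition CsF := flatten [seq [seq mk b t | t <- TC (kindb b)] | b <- blocks k].
Definition CsD := flatten [seq [seq mk b t | t <- TD (kindb b)] | b <- blocks k].

Lemma packing_gen (TT : nat -> seq (8.-tuple nat)) :
  (forall b : blk, all (tok (kindb b)) (TT (kindb b)) && pairwise tdisj (TT (kindb b))) ->
  is_packing (flatten [seq [seq mk b t | t <- TT (kindb b)] | b <- blocks k]).
Proof.
move=> hg; apply/andP; split.
  rewrite all_flat; apply/allP => b bk; rewrite all_map; apply/allP => t tT /=.
  by apply: uniq_mk; [exact: blocks_valid | case/andP: (hg b) => /allP ->].
apply: pw_flat; first exact: blocks_uniq.
  move=> b bk; rewrite pairwise_map.
  case/andP: (hg b) => ha hp.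
  apply: (sub_in_pairwise (P := tok (kindb b))) hp => // t s ht hs hd.
  by apply: disj_gen => //; exact: blocks_valid.
move=> b b' x y bk b'k bb' /mapP[t tT ->] /mapP[s sT ->].
case/andP: (hg b) => /allP ha _; case/andP: (hg b') => /allP ha' _.
apply: disj_gen; rewrite ?ha ?ha' //; try exact: blocks_valid.
by move=> E; rewrite E eqxx in bb'.
Qed.

Lemma main_k : exists Cs : seq (cycle8 n), maximum_packing Cs /\ almost_2perfect Cs.
Proof.
have pC : is_packing CsF.
  apply: packing_gen => b; move: (goodk b); rewrite /good => /and5P[-> _ -> _ _] //.
have pD : is_packing CsD.
  apply: packing_gen => b; move: (goodk b); rewrite /good => /and5P[_ -> _ -> _] //.
exists CsF; split.
  split => // Ds pDs.
  case: (card_leave pC) => -> _; case: (card_leave pDs) => -> hle.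
  have sz : size CsF = 16 * k * k + 17 * k + 4.
    by rewrite /CsF size_flatten /shape -map_comp -sumn_blocks; congr sumn; apply: eq_map => b /=; rewrite size_map.
  have cn : 'C(n, 2) = 8 * (16 * k * k + 17 * k + 4) + 4.
    rewrite bin2 /=.
    have -> : (16 * k + 8).+1 * (16 * k + 8) = (8 * (16 * k * k + 17 * k + 4) + 4).*2.
      rewrite -mul2n; lia.
    by rewrite doubleK.
  rewrite sz cn in hle *; lia.
exists CsD; split => //.
  apply: all2_flat => b bk.
  have vb := blocks_valid bk.
  case/and5P: (goodk b) => /allP h1 /allP h2 _ _ /and3P[h5 _ _].
  elim: (TC (kindb b)) (TD (kindb b)) h1 h2 h5 => [|t T IH] [|t' T'] //= h1 h2 /andP[i5 a5].
  rewrite (inside_mk vb (h1 t (mem_head _ _)) (h2 t' (mem_head _ _)) i5) /=.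
  by apply: IH => // x xT; [apply: h1 | apply: h2]; rewrite inE xT orbT.
rewrite /leave; apply/setP => e; rewrite !in_setD !mem_bigcup_has /CsF /CsD !has_flat; congr (~~ _ && _).
apply: eq_in_has => b bk; have vb := blocks_valid bk.
case/and5P: (goodk b) => h1 h2 _ _ /and3P[_ c1 c2].
rewrite !has_map; apply/idP/idP => /hasP[t tT et].
  exact: (cover_mk vb h1 h2 c1 tT et).
exact: (cover_mk vb h2 h1 c2 tT et).
Qed.

End Main.

Theorem lemma3p5 (n : nat) :
  9 <= n -> n %% 16 = 9 ->
  exists Cs : seq (cycle8 n), maximum_packing Cs /\ almost_2perfect Cs.
Proof.
move=> h9 hm.
have E : n = (16 * (n %/ 16) + 8).+1 by move: (divn_eq n 16); rewrite hm; lia.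
by move: (main_k (n %/ 16)); rewrite -E.
Qed.
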